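(* Let $X$ be a nonempty shift space over a finite alphabet. Then: (1) $X$ is boundedly supermultiplicative if and only if there exist constants $c_1,c_2>0$ such that for every $n\ge1$, $$c_1\le\frac{2^{n h(X)}}{|\mathcal{B}_n(X)|}\le c_2.$$ Consequently, if $X$ is boundedly supermultiplicative, a probability measure on $X$ is a Gibbs state if and only if it is a Gibbs-like state. (2) If $X$ admits a Gibbs state, then $X$ is boundedly supermultiplicative; in particular, every Gibbs state on $X$ is a Gibbs-like state.
   Context: $\mathcal{B}_n(X)$ is the set of words of length $n$ appearing in points of $X$, $\mathcal{B}(X)=\bigcup_n\mathcal{B}_n(X)$, and $h(X)=\lim_{n}\frac1n\log|\mathcal{B}_n(X)|$ with $\log$ to base $2$. $X$ is boundedly supermultiplicative if there is $K\ge1$ with $|\mathcal{B}_m(X)|\cdot|\mathcal{B}_n(X)|\le K|\mathcal{B}_{m+n}(X)|$ for all $m,n\ge1$. For a word $\omega$, $[\omega]$ denotes the cylinder set of points of $X$ having $\omega$ at a fixed position. A (Borel) probability measure $\mu$ on $X$ is a Gibbs-like state if there exist $c_1,c_2>0$ such that for all $\omega\in\mathcal{B}(X)$ of length $r$, $c_1\le\mu([\omega])\,|\mathcal{B}_r(X)|\le c_2$; it is a Gibbs state if there exist $c_1,c_2>0$ such that for all $\omega\in\mathcal{B}(X)$ of length $r$, $c_1\le\mu([\omega])\,2^{r h(X)}\le c_2$. *)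

(* Defs.v *)
From HB Require Import structures.
From mathcomp Require Import all_boot all_order all_algebra.
From mathcomp Require Import all_classical all_reals.
From mathcomp Require Import topology normedtype sequences exp measure probability.
Set Implicit Arguments. Unset Strict Implicit. Unset Printing Implicit Defensive.
Import Order.TTheory GRing.Theory Num.Theory.
Import numFieldTopology.Exports numFieldNormedType.Exports.
Local Open Scope classical_set_scope.
Local Open Scope ring_scope.

(* A finite alphabet.  It is a finType; we also ask for a distinguished point,
   which is needed to build the measurable space of configurations
   (any alphabet of a nonempty shift space is nonempty). *)
HB.structure Definition FinPointed := {T of Finite T & isPointed T}.
Notation finPointedType := FinPointed.type.

Definition config (A : finPointedType) := int -> A.

Definition shift (A : finPointedType) (x : config A) : config A :=
  fun i => x (i + 1)%R.

(* X is closed in the product topology: a configuration all of whose central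
   windows x_[-n,n] are seen in points of X belongs to X. *)
Definition closed_config (A : finPointedType) (X : set (config A)) : Prop :=
  forall x : config A,
    (forall n : nat, exists y, X y /\ forall i : int, (`|i| <= n)%N -> y i = x i) ->
    X x.

Definition shift_space (A : finPointedType) (X : set (config A)) : Prop :=
  closed_config X /\ (@shift A) @` X = X.

Definition appears (A : finPointedType) (n : nat) (w : n.-tuple A) (x : config A) : Prop :=
  exists i : int, forall k : 'I_n, x (i + (k : nat)%:Z)%R = tnth w k.

Definition lang (A : finPointedType) (X : set (config A)) (n : nat) : {set n.-tuple A} :=
  [set w : n.-tuple A | `[< exists x, X x /\ appears w x >]].

Definition log2 (R : realType) (x : R) : R := ln x / ln 2.

Definition entropy (R : realType) (A : finPointedType) (X : set (config A)) : R :=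
  limn ((fun n : nat => log2 (#|lang X n|%:R : R) / n%:R) : nat -> R).

Definition bsm (R : realType) (A : finPointedType) (X : set (config A)) : Prop :=
  exists K : R, 1 <= K /\
    forall m n : nat, (0 < m)%N -> (0 < n)%N ->
      ((#|lang X m| * #|lang X n|)%:R : R) <= K * (#|lang X (m + n)|%:R).

Definition cyl_at (A : finPointedType) (n : nat) (i : int) (w : n.-tuple A) : set (config A) :=
  [set x | forall k : 'I_n, x (i + (k : nat)%:Z)%R = tnth w k].

Definition cylinders (A : finPointedType) : set (set (config A)) :=
  [set C | exists n i (w : n.-tuple A), C = cyl_at i w].

(* the measurable space of configurations: Borel sigma-algebra of the product
   topology, i.e. the sigma-algebra generated by cylinders *)
Definition configM (A : finPointedType) := g_sigma_algebraType (@cylinders A).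

Definition cyl (A : finPointedType) (X : set (config A)) (n : nat) (w : n.-tuple A)
  : set (configM A) := X `&` cyl_at 0 w.

Definition gibbs_like (R : realType) (A : finPointedType) (X : set (config A))
  (mu : probability (configM A) R) : Prop :=
  exists c1 c2 : R, 0 < c1 /\ 0 < c2 /\
    forall (r : nat) (w : r.-tuple A), (0 < r)%N -> w \in lang X r ->
      (c1%:E <= mu (cyl X w) * (#|lang X r|%:R)%:E <= c2%:E)%E.

Definition gibbs (R : realType) (A : finPointedType) (X : set (config A))
  (mu : probability (configM A) R) : Prop :=
  exists c1 c2 : R, 0 < c1 /\ 0 < c2 /\
    forall (r : nat) (w : r.-tuple A), (0 < r)%N -> w \in lang X r ->
      (c1%:E <= mu (cyl X w) * (2 `^ (r%:R * entropy R X))%:E <= c2%:E)%E.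

Definition on_X (R : realType) (A : finPointedType) (X : set (config A))
  (mu : probability (configM A) R) : Prop := mu (X : set (configM A)) = 1%E.

(* Main.v *)
Require Import Defs.
From HB Require Import structures.
From mathcomp Require Import all_boot all_order all_algebra.
From mathcomp Require Import all_classical all_reals.
From mathcomp Require Import topology normedtype sequences exp measure probability.
Import Order.TTheory GRing.Theory Num.Theory.
Import numFieldTopology.Exports numFieldNormedType.Exports.
Local Open Scope classical_set_scope.
Local Open Scope ring_scope.
From mathcomp Require Import zify.

Section Comb.
Variables (A : finPointedType) (X : set (config A)).

Definition wat n (x : config A) (i : int) : n.-tuple A :=
  [tuple x (i + (k:nat)%:Z)%R | k < n].

Lemma wat_lang n x : X x -> wat n x 0 \in lang X n.
Proof.
move=> Xx; rewrite inE; apply/asboolP; exists x; split=> //; exists 0 => k.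
by rewrite tnth_mktuple.
Qed.

Lemma lang_gt0 n : X !=set0 -> (0 < #|lang X n|)%N.
Proof. by case=> x Xx; apply/card_gt0P; exists (wat n x 0); exact: wat_lang. Qed.

Lemma lang_sub m n : (#|lang X (m + n)| <= #|lang X m| * #|lang X n|)%N.
Proof.
pose f (w : (m+n).-tuple A) := ([tuple tnth w (lshift n i) | i < m],
                                 [tuple tnth w (rshift m j) | j < n]).
have finj : injective f.
  move=> w1 w2 e; apply: eq_from_tnth => k.
  case: (splitP k) => [i ki | j kj].
  - have -> : k = lshift n i by apply: val_inj.
    by have := congr1 (fun p => tnth p.1 i) e; rewrite /f /= !tnth_mktuple.
  - have -> : k = rshift m j by apply: val_inj.
    by have := congr1 (fun p => tnth p.2 j) e; rewrite /f /= !tnth_mktuple.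
rewrite -(card_imset (lang X (m+n)) finj) -cardsX.
apply: subset_leq_card; apply/fintype.subsetP => _ /imsetP [w hw ->].
move: hw; rewrite inE => /asboolP [x [Xx [i hi]]].
rewrite finset.in_setX !inE; apply/andP; split; apply/asboolP; exists x; split => //.
- exists i => k; rewrite tnth_mktuple; exact: (hi (lshift n k)).
- exists (i + m%:Z)%R => k; rewrite tnth_mktuple -addrA -PoszD.
  exact: (hi (rshift m k)).
Qed.

Lemma cyl_meas n i (w : n.-tuple A) : measurable (cyl_at i w : set (configM A)).
Proof. by apply: sub_sigma_algebra; exists n, i, w. Qed.

Lemma X_meas : closed_config X -> measurable (X : set (configM A)).
Proof.
move=> cX.
pose S n := \bigcup_(w in [set wat (n+n).+1 y (- n%:Z)%R | y in X])
              (cyl_at (- n%:Z)%R w : set (configM A)).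
have -> : (X : set (configM A)) = \bigcap_(n in setT) S n.
  apply/seteqP; split.
  - move=> x Xx n _; exists (wat (n+n).+1 x (- n%:Z)%R); first by exists x.
    by move=> k; rewrite tnth_mktuple.
  - move=> x hx; apply: cX => n.
    have [_ [y Xy <-] hxy] := hx n I.
    exists y; split => // i hi.
    have hk : (absz (i + n%:Z)%R < (n+n).+1)%N by lia.
    have := hxy (Ordinal hk); rewrite tnth_mktuple /=.
    have -> : (- n%:Z + (absz (i + n%:Z)%R)%:Z)%R = i by lia.
    by move=> ->.
apply: bigcap_measurable; first by exists 0.
move=> n _; apply: fin_bigcup_measurable; first exact: finite_finset.
by move=> w _; exact: cyl_meas.
Qed.
End Comb.
Arguments wat {A}. Arguments wat_lang {A X}. Arguments lang_gt0 {A X}.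
Arguments lang_sub {A X}. Arguments cyl_meas {A n}. Arguments X_meas {A X}.
From mathcomp Require Import ring lra.

Section Fek.
Variable R : realType.

Lemma divle (x y : R) (m n : nat) : (0 < m)%N -> (0 < n)%N ->
  m%:R * x <= n%:R * y -> x / n%:R <= y / m%:R.
Proof.
move=> m0 n0 h; rewrite ler_pdivlMr ?ltr0n // mulrAC ler_pdivrMr ?ltr0n //.
by rewrite mulrC [y * _]mulrC.
Qed.

Lemma fekete (s : nat -> R) (c : R) : 0 <= c ->
  (forall m n, s (m + n)%N <= s m + s n) ->
  (forall m n, (0 < m)%N -> (0 < n)%N -> s m + s n <= c + s (m + n)%N) ->
  exists L, forall n, (0 < n)%N -> s n - c <= n%:R * L <= s n + c.
Proof.
move=> c0 sub supa.
have hsup n k : (0 < n)%N -> (k.+1)%:R * (s n - c) <= s (k.+1 * n)%N - c.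
  move=> n0; elim: k => [|k IH]; first by rewrite mul1r mul1n.
  rewrite mulSn -(addn1 k.+1) natrD mulrDl mul1r.
  have hp : (0 < k.+1 * n)%N by rewrite muln_gt0 n0.
  have := supa n (k.+1 * n)%N n0 hp. lra.
have hsub m k : s (k.+1 * m)%N <= (k.+1)%:R * s m.
  elim: k => [|k IH]; first by rewrite mul1r mul1n.
  rewrite mulSn -(addn1 k.+1) natrD mulrDl mul1r.
  have := sub m (k.+1 * m)%N. lra.
have key m n : (0 < m)%N -> (0 < n)%N -> (s n - c) / n%:R <= (s m + c) / m%:R.
  move=> m0 n0; apply: divle => //.
  case: m m0 => // m _; case: n n0 => // n _.
  have h1 := hsup n.+1 m isT.
  have h2 := hsub m.+1 n.
  rewrite mulnC in h1.
  have hn : 1 <= (n.+1)%:R :> R by rewrite ler1n.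
  have : c <= (n.+1)%:R * c by rewrite ler_peMl.
  rewrite mulrDr. lra.
pose E := [set (s n - c) / n%:R | n in [set n | (0 < n)%N]].
have hE : E !=set0 by exists ((s 1 - c) / 1%:R); exists 1%N.
have hub : has_ubound E.
  by exists ((s 1 + c) / 1%:R) => _ [n n0 <-]; apply: key.
exists (sup E) => n n0.
have l1 : (s n - c) / n%:R <= sup E by apply: ub_le_sup => //; exists n.
have l2 : sup E <= (s n + c) / n%:R.
  by apply: ge_sup => // _ [m m0 <-]; apply: key.
move: l1 l2; rewrite ler_pdivrMr ?ltr0n // ler_pdivlMr ?ltr0n // => l1 l2.
by rewrite [_ * sup E]mulrC l1 l2.
Qed.

Lemma cvg_fek (s : nat -> R) (c L : R) : 0 <= c ->
  (forall n, (0 < n)%N -> s n - c <= n%:R * L <= s n + c) ->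
  (fun n => s n / n%:R) @ \oo --> L.
Proof.
move=> c0 h; apply/cvgrPdist_le => e e0.
exists (Num.truncn (c / e)).+1 => // n /= hn.
have n0 : (0 < n)%N by apply: leq_trans hn.
have n0' : 0 < n%:R :> R by rewrite ltr0n.
have -> : L - s n / n%:R = (n%:R * L - s n) / n%:R.
  by rewrite mulrBl [n%:R * L]mulrC mulfK ?gt_eqF.
rewrite normrM normfV (gtr0_norm n0') ler_pdivrMr //.
have hb : `|n%:R * L - s n| <= c by rewrite ler_norml; have := h n n0; lra.
apply: (le_trans hb).
have : c / e < n%:R.
  apply: (lt_le_trans (truncnS_gt _)); by rewrite ler_nat.
rewrite ltr_pdivrMr // => /ltW; by rewrite mulrC.
Qed.
End Fek.
Section Main.
Variables (R : realType) (A : finPointedType) (X : set (config A)).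
Hypothesis X0 : X !=set0.

Local Notation b n := (#|lang X n|%:R : R).
Definition sl (n : nat) : R := log2 (#|lang X n|%:R : R).

Lemma bpos n : 0 < b n.
Proof. by rewrite ltr0n; apply: lang_gt0. Qed.

Lemma ln2_gt0 : 0 < ln (2 : R).
Proof. by apply: ln_gt0; rewrite ltr1n. Qed.

Lemma two_neq0 : (2 : R) != 0.
Proof. by rewrite pnatr_eq0. Qed.

Lemma log2M (x y : R) : 0 < x -> 0 < y -> log2 (x * y) = log2 x + log2 y.
Proof. by move=> x0 y0; rewrite /log2 lnM ?posrE // mulrDl. Qed.

Lemma log2_le (x y : R) : 0 < x -> 0 < y -> x <= y -> log2 x <= log2 y.
Proof.
move=> x0 y0 xy; rewrite /log2 ler_pM2r ?invr_gt0 ?ln2_gt0 //.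
by rewrite ler_ln ?posrE.
Qed.

Lemma p2log (x : R) : 0 < x -> 2 `^ (log2 x) = x.
Proof.
move=> x0; rewrite /powR (negbTE two_neq0) /log2 divfK ?gt_eqF ?ln2_gt0 //.
by rewrite lnK ?posrE.
Qed.

Lemma p2D (r t : R) : 2 `^ (r + t) = 2 `^ r * 2 `^ t.
Proof. by apply: powRD; apply/implyP => _; exact: two_neq0. Qed.

Lemma p2le (r t : R) : r <= t -> 2 `^ r <= 2 `^ t.
Proof. by apply: ler_powR; rewrite ler1n. Qed.

Lemma sl_sub m n : sl (m + n)%N <= sl m + sl n.
Proof.
rewrite /sl -log2M ?bpos //; apply: log2_le; rewrite ?mulr_gt0 ?bpos //.
by rewrite -natrM ler_nat lang_sub.
Qed.

Definition ratio := exists c1 c2 : R, 0 < c1 /\ 0 < c2 /\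
  forall n : nat, (0 < n)%N ->
    c1 <= 2 `^ (n%:R * entropy R X) / (#|lang X n|%:R) <= c2.

Lemma ratio_bsm : ratio -> bsm R X.
Proof.
move=> [c1 [c2 [c10 [c20 h]]]].
set P := fun k : nat => 2 `^ (k%:R * entropy R X).
have Ppos k : 0 < P k by apply: powR_gt0; rewrite ltr0n.
have PD m n : P (m + n)%N = P m * P n by rewrite /P natrD mulrDl p2D.
have lo k : (0 < k)%N -> c1 * b k <= P k.
  move=> k0; have /andP[+ _] := h k k0; by rewrite ler_pdivlMr ?bpos.
have hi k : (0 < k)%N -> P k <= c2 * b k.
  move=> k0; have /andP[_ +] := h k k0; by rewrite ler_pdivrMr ?bpos.
exists (1 + c2 / (c1 * c1)); split.
  by rewrite lerDl; apply: divr_ge0; [exact: ltW | apply: mulr_ge0; exact: ltW].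
move=> m n m0 n0.
have e1 : c1 * b m * (c1 * b n) <= P (m + n)%N.
  rewrite PD; apply: ler_pM; [| |exact: lo|exact: lo];
    by apply: mulr_ge0; apply: ltW; rewrite ?bpos.
have e2 : b m * b n <= c2 / (c1 * c1) * b (m + n)%N.
  rewrite mulrAC ler_pdivlMr ?mulr_gt0 //.
  apply: le_trans (hi _ _); last by rewrite addn_gt0 m0.
  apply: le_trans e1; rewrite le_eqVlt; apply/orP; left; apply/eqP; ring.
rewrite natrM; apply: (le_trans e2).
rewrite mulrDl mul1r lerDr; exact: ltW (bpos _).
Qed.

Lemma bsm_ratio : bsm R X -> ratio.
Proof.
move=> [K [K1 hK]].
have K0 : 0 < K by apply: lt_le_trans K1.
set c := log2 K.
have c0 : 0 <= c.
  by rewrite /c /log2; apply: divr_ge0; [exact: ln_ge0 | exact: ltW ln2_gt0].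
have supa m n : (0 < m)%N -> (0 < n)%N -> sl m + sl n <= c + sl (m + n)%N.
  move=> m0 n0; rewrite /sl /c -!log2M ?bpos //; apply: log2_le;
    rewrite ?mulr_gt0 ?bpos //.
  by rewrite -natrM; apply: hK.
have [L hL] := @fekete R sl c c0 sl_sub supa.
have hE : entropy R X = L.
  apply: cvg_lim => //; exact: (@cvg_fek R sl c L c0 hL).
exists K^-1, K; split; first by rewrite invr_gt0.
split => // n n0; rewrite hE.
have /andP[l1 l2] := hL n n0.
have bn := bpos n.
have pK : 2 `^ c = K by apply: p2log.
have pb : 2 `^ sl n = b n by apply: p2log.
apply/andP; split.
- rewrite ler_pdivlMr // mulrC.
  have e1 : 2 `^ (sl n - c) * K = b n by rewrite -pK -p2D subrK.
  by rewrite -e1 mulfK ?gt_eqF //; apply: p2le.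
- rewrite ler_pdivrMr //; apply: le_trans; first exact: (p2le _ _ l2).
  by rewrite p2D pb pK mulrC.
Qed.

Section Mu.
Variable mu : probability (configM A) R.
Hypothesis cX : closed_config X.

Definition mm {n} (w : n.-tuple A) : R := fine (mu (cyl X w)).

Lemma cyl_measX {n} (w : n.-tuple A) : measurable (cyl X w).
Proof. by apply: measurableI; [exact: X_meas | exact: cyl_meas]. Qed.

Lemma muE n (w : n.-tuple A) : mu (cyl X w) = (mm w)%:E.
Proof.
rewrite /mm fineK // ge0_fin_numE ?measure_ge0 //.
exact: le_lt_trans (probability_le1 _ (cyl_measX w)) (ltry _).
Qed.

Lemma mm_ge0 n (w : n.-tuple A) : 0 <= mm w.
Proof. by rewrite /mm fine_ge0 ?measure_ge0. Qed.

Lemma sum_mm n : on_X X mu -> \sum_(w in lang X n) mm w = 1.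
Proof.
move=> hX.
pose D := [set` enum (lang X n)].
have eX : (X : set (configM A)) = \bigcup_(w in D) cyl X w.
  apply/seteqP; split.
  - move=> x Xx; exists (wat n x 0).
      by rewrite /D /= mem_enum; exact: wat_lang.
    by split => // k; rewrite tnth_mktuple.
  - by move=> x [w _ []].
have tD : trivIset D (fun w => cyl X w).
  move=> w1 w2 _ _ [x [[_ h1] [_ h2]]]; apply: eq_from_tnth => k.
  by rewrite -h1 -h2.
have := measure_fin_bigcup mu finite_finset tD (fun w _ => cyl_measX w).
rewrite -eX => h; have := etrans (esym hX) h.
rewrite -fsbig_seq ?enum_uniq // big_enum /=.
under eq_bigr do rewrite muE.
by rewrite sumEFin => -[].
Qed.

Lemma gibbs_ratio : on_X X mu -> gibbs X mu -> ratio.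
Proof.
move=> hX [c1 [c2 [c10 [c20 hg]]]].
exists c1, c2; do 2 split => //.
move=> n n0.
set P := 2 `^ (n%:R * entropy R X).
have P0 : 0 < P by apply: powR_gt0; rewrite ltr0n.
have hw w : w \in lang X n -> c1 <= mm w * P <= c2.
  by move=> wl; have := hg n w n0 wl; rewrite muE -EFinM !lee_fin.
have eP : \sum_(w in lang X n) mm w * P = P by rewrite -mulr_suml sum_mm // mul1r.
have bn := bpos n.
apply/andP; split.
- rewrite ler_pdivlMr // -eP.
  have -> : c1 * b n = \sum_(w in lang X n) c1 by rewrite sumr_const mulr_natr.
  by apply: ler_sum => w wl; have /andP[] := hw w wl.
- rewrite ler_pdivrMr // -eP.
  have -> : c2 * b n = \sum_(w in lang X n) c2 by rewrite sumr_const mulr_natr.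
  by apply: ler_sum => w wl; have /andP[] := hw w wl.
Qed.

Lemma ratio_gibbs : ratio -> (gibbs X mu <-> gibbs_like X mu).
Proof.
move=> [d1 [d2 [d10 [d20 hd]]]].
have hq r : (0 < r)%N -> 0 < 2 `^ (r%:R * entropy R X) / b r.
  by move=> _; rewrite divr_gt0 ?bpos // powR_gt0 // ltr0n.
split.
- move=> [c1 [c2 [c10 [c20 hg]]]].
  exists (c1 / d2), (c2 / d1); split; first exact: divr_gt0.
  split; first exact: divr_gt0.
  move=> r w r0 wl; rewrite muE -EFinM !lee_fin.
  have := hg r w r0 wl; rewrite muE -EFinM !lee_fin => /andP[g1 g2].
  have /andP[q1 q2] := hd r r0.
  have q0 := hq r r0.
  have P0 : 0 < 2 `^ (r%:R * entropy R X) by rewrite powR_gt0 // ltr0n.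
  have bn := bpos r.
  move: q1 q2 q0 g1 g2.
  set P := 2 `^ (r%:R * entropy R X); set q := P / b r => q1 q2 q0 g1 g2.
  have -> : mm w * b r = (mm w * P) / q.
    by rewrite /q; field; rewrite (gt_eqF bn) (gt_eqF P0).
  have x0 : 0 <= mm w * P by apply: le_trans g1; exact: ltW.
  apply/andP; split.
  + apply: ler_pM; [exact: ltW | by rewrite invr_ge0 ltW | exact: g1 |].
    by rewrite lef_pV2 ?posrE // (lt_le_trans d10).
  + apply: ler_pM; [exact: x0 | by rewrite invr_ge0 ltW | exact: g2 |].
    by rewrite lef_pV2 ?posrE.
- move=> [c1 [c2 [c10 [c20 hg]]]].
  exists (c1 * d1), (c2 * d2); split; first exact: mulr_gt0.
  split; first exact: mulr_gt0.
  move=> r w r0 wl; rewrite muE -EFinM !lee_fin.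
  have := hg r w r0 wl; rewrite muE -EFinM !lee_fin => /andP[g1 g2].
  have /andP[q1 q2] := hd r r0.
  have P0 : 0 < 2 `^ (r%:R * entropy R X) by rewrite powR_gt0 // ltr0n.
  have bn := bpos r.
  move: q1 q2 g1 g2.
  set P := 2 `^ (r%:R * entropy R X); set q := P / b r => q1 q2 g1 g2.
  have -> : mm w * P = (mm w * b r) * q.
    by rewrite /q; field; rewrite (gt_eqF bn).
  have x0 : 0 <= mm w * b r by apply: le_trans g1; exact: ltW.
  apply/andP; split.
  + by apply: ler_pM => //; exact: ltW.
  + by apply: ler_pM => //; apply: le_trans q1; exact: ltW.
Qed.
End Mu.

End Main.

Theorem proposition3p13 (R : realType) (A : finPointedType) (X : set (config A)) :
  shift_space X -> X !=set0 ->
  (* (1) *)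
  (bsm R X <->
     exists c1 c2 : R, 0 < c1 /\ 0 < c2 /\
       forall n : nat, (0 < n)%N ->
         c1 <= 2 `^ (n%:R * entropy R X) / (#|lang X n|%:R) <= c2) /\
  (bsm R X ->
     forall mu : probability (configM A) R, on_X X mu ->
       (gibbs X mu <-> gibbs_like X mu)) /\
  (* (2) *)
  ((exists mu : probability (configM A) R, on_X X mu /\ gibbs X mu) -> bsm R X) /\
  (forall mu : probability (configM A) R, on_X X mu -> gibbs X mu -> gibbs_like X mu).
Proof.
move=> [cX _] X0.
split; first by split; [exact: (bsm_ratio _ _ _ X0) | exact: (ratio_bsm _ _ _ X0)].
split.
  move=> hb mu hX; apply: (ratio_gibbs _ _ _ X0 mu cX); exact: (bsm_ratio _ _ _ X0).
split.
  move=> [mu [hX hg]]; apply: (ratio_bsm _ _ _ X0); exact: (gibbs_ratio _ _ _ X0 mu cX hX hg).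
move=> mu hX hg.
exact: (proj1 (ratio_gibbs _ _ _ X0 mu cX (gibbs_ratio _ _ _ X0 mu cX hX hg)) hg).
Qed.
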